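(* Let $I\ge 0$, $S\ge 1$ and $j$ be integers with $L(I,S)\le j\le\lfloor I/2\rfloor$, consider the pairing process described in the context, and fix a clean device $w_t$. Let $B$ be a set of $j$ bb-pairings that is the set of bb-pairings of some possible wiring. The number of possible wirings whose set of bb-pairings is exactly $B$ and in which $w_t$ is paired equals $S!$ if $(I,S,j)$ is in the dagger case, and equals $(I-2j)!\binom{S-1}{I-2j-1}$ otherwise, with the convention $\binom{A}{B}=0$ when $B<0$.
   Context: Pairing process: there are $I$ infected devices $b_1,\dots,b_I$ and $S$ clean devices $w_1,\dots,w_S$. For $t=1,\dots,I$ in this order: if $b_t$ is not yet paired and at least one device other than $b_t$ is not yet paired, then $b_t$ chooses one of the currently unpaired devices other than itself uniformly at random, independently of previous choices, and becomes paired with it; otherwise $b_t$ does nothing. Each device belongs to at most one pair. The wiring is the final set of pairs; a bb-pairing is a pair consisting of two infected devices; a wiring is possible if it occurs with positive probability. $L(I,S)=0$ if $I\le S$; $L(I,S)=\frac{I-S}{2}$ if $I>S$ and $I-S$ is even; $L(I,S)=\frac{I-S-1}{2}$ if $I>S$ and $I-S$ is odd. $(I,S,j)$ is in the dagger case if $I>S$, $I+S$ is odd and $j=\frac{I-S-1}{2}$. *)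

(* Defs.v *)
From mathcomp Require Import all_boot.
Set Implicit Arguments. Unset Strict Implicit. Unset Printing Implicit Defensive.

(* Devices: inl i = infected device b_(i+1), inr k = clean device w_(k+1). *)
Definition device (I S : nat) : finType := ('I_I + 'I_S)%type.

Definition wiring (I S : nat) := {set {set device I S}}.

Section Process.
Variables I S : nat.
Implicit Types (W : wiring I S) (x y : device I S).

Definition is_paired W x : bool := [exists p in W, x \in p].

Definition infected x : bool := if x is inl _ then true else false.

Definition turn (t : 'I_I) W : {set wiring I S} :=
  let b := (inl t : device I S) in
  if ~~ is_paired W b && [exists y, (y != b) && ~~ is_paired W y] then
    [set [set b; y] |: W | y in [pred y | (y != b) && ~~ is_paired W y]]
  else [set W].

Definition turn_all (t : 'I_I) (R : {set wiring I S}) : {set wiring I S} :=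
  \bigcup_(W in R) turn t W.

(* States reachable with positive probability after the turns of b_1..b_I,
   processed in the order t = 1, ..., I (enum 'I_I is increasing). *)
Definition possible_wirings : {set wiring I S} :=
  foldl (fun R t => turn_all t R) [set set0] (enum 'I_I).

Definition possible W : bool := W \in possible_wirings.

Definition bb_pairings W : {set {set device I S}} :=
  [set p in W | [forall x in p, infected x]].

End Process.

Definition Lbound (I S : nat) : nat :=
  if I <= S then 0
  else if ~~ odd (I - S) then (I - S)./2 else (I - S - 1)./2.

Definition dagger (I S j : nat) : bool :=
  [&& S < I, odd (I + S) & j == (I - S - 1)./2].

(* Main.v *)
Require Import Defs.
From mathcomp Require Import all_boot zify.
Set Implicit Arguments. Unset Strict Implicit. Unset Printing Implicit Defensive.

Definition Inv (I S : nat) (k : nat) (W : wiring I S) : Prop :=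
  [/\ (forall p, p \in W -> #|p| = 2),
      (forall p, p \in W -> exists i : 'I_I, (i < k) /\ inl i \in p),
      (forall p q x, p \in W -> q \in W -> x \in p -> x \in q -> p = q)
    & (forall u : 'I_I, u < k -> ~~ is_paired W (inl u) ->
         (forall y, y != inl u -> is_paired W y) /\
         (forall p, p \in W -> exists s : 'I_I, (s < u) /\ inl s \in p))].

Arguments Inv : clear implicits.

Definition R (I S : nat) k : {set wiring I S} :=
  foldl (fun R t => turn_all t R) [set set0] (take k (enum 'I_I)).
Arguments R : clear implicits.

Lemma R_step I S k (Hk : k < I) :
  R I S k.+1 = turn_all (Ordinal Hk) (R I S k).
Proof.
rewrite /R (take_nth (Ordinal Hk)) ?size_enum_ord // foldl_rcons; congr turn_all.
by apply: val_inj; rewrite /= nth_enum_ord.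
Qed.

Lemma R_end I S : R I S I = possible_wirings I S.
Proof. by rewrite /R take_oversize ?size_enum_ord. Qed.

Lemma pairedP I S (W : wiring I S) x :
  reflect (exists2 p, p \in W & x \in p) (is_paired W x).
Proof. by apply: (iffP existsP) => [[p /andP[]]|[p H1 H2]]; [exists p | exists p; rewrite H1]. Qed.

Lemma Inv_step I S (t : 'I_I) (W W' : wiring I S) :
  Inv I S t W -> W' \in turn t W -> Inv I S t.+1 W'.
Proof.
case=> H1 H2 H3 H4; rewrite /turn.
case: ifP => [/andP[nb _] /imsetP[y]|Hc]; last first.
  move/set1P=> ->; split=> //.
  - by move=> p /H2 [i [Hi ip]]; exists i; split=> //; apply: ltnW.
  move=> u; rewrite ltnS leq_eqVlt => /orP[/eqP Eu|]; last exact: H4.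
  have -> : u = t by apply: val_inj.
  move=> nu; move: Hc; rewrite nu /=; move/negbT/existsPn => Hy.
  split; first by move=> y ny; move: (Hy y); rewrite ny /= negbK.
  by move=> p /H2.
rewrite inE => /andP[ny npy] ->.
have Hn (q : {set device I S}) x : q \in W -> x \in q -> x \in [set inl t; y] -> False.
  move=> qW xq; rewrite !inE => /orP[]/eqP Ex; subst x.
    by move/negP: nb; apply; apply/pairedP; exists q.
  by move/negP: npy; apply; apply/pairedP; exists q.
split.
- move=> p; rewrite in_setU1 => /orP[/eqP->|/H1//]; rewrite cards2 eq_sym ny //.
- move=> p; rewrite in_setU1 => /orP[/eqP->|/H2[i [Hi ip]]].
    by exists t; rewrite !inE eqxx.
  by exists i; split=> //; apply: ltnW.
- move=> p q x; rewrite !in_setU1 => /orP[/eqP->|pW] /orP[/eqP->|qW] xp xq //.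
    by case: (Hn _ _ qW xq xp).
  by case: (Hn _ _ pW xp xq).
  exact: H3 xp xq.
move=> u; rewrite ltnS leq_eqVlt => /orP[/eqP Eu|ut] nu.
  have Eu' : u = t by apply: val_inj.
  by subst u; move/negP: nu; case; apply/pairedP; exists [set inl t; y]; rewrite !inE eqxx.
have nu' : ~~ is_paired W (inl u).
  apply/negP=> /pairedP [p pW up]; move/negP: nu; apply; apply/pairedP; exists p => //.
  by rewrite inE pW orbT.
have [Ha _] := H4 u ut nu'.
have : inl t != inl u :> device I S.
  by apply/eqP=> [[E]]; move: ut; rewrite E ltnn.
by move/Ha; rewrite (negbTE nb).
Qed.

Lemma R_Inv I S k (W : wiring I S) : k <= I -> W \in R I S k -> Inv I S k W.
Proof.
elim: k W => [|k IH] W.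
  rewrite /R take0 /= => _ /set1P ->; split=> [p|p|p q x|u]; rewrite ?inE // => _; apply/negP => /pairedP [p]; rewrite inE.
move=> Hk; rewrite (@R_step I S k Hk) => /bigcupP [W1 W1R HW].
exact: (@Inv_step I S (Ordinal Hk) W1 W (IH W1 (ltnW Hk) W1R) HW).
Qed.

Definition Wk I S (W : wiring I S) k : wiring I S :=
  [set p in W | [exists s : 'I_I, (s < k) && (inl s \in p)]].

Lemma Wk_R I S (W : wiring I S) k : Inv I S I W -> k <= I -> Wk W k \in R I S k.
Proof.
case=> H1 H2 H3 H4.
elim: k => [|k IH] Hk.
  rewrite /R take0 /=; apply/set1P/setP=> p; rewrite !inE.
  by apply/negbTE/negP => /andP[_ /existsP[s /andP[]]].
rewrite (@R_step I S k Hk); apply/bigcupP; exists (Wk W k); first exact: IH (ltnW Hk).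
set t := Ordinal Hk.
have Wsub : forall k', Wk W k' \subset W by move=> k'; apply/subsetP=> p; rewrite inE => /andP[].
rewrite /turn.
case: (boolP (is_paired W (inl t))) => [/pairedP [p pW bp]|nb].
  case: (boolP [exists s : 'I_I, (s < k) && (inl s \in p)]) => Hs.
    have pk : p \in Wk W k by rewrite inE pW.
    have -> : ~~ is_paired (Wk W k) (inl t) = false.
      by apply/negbF/pairedP; exists p.
    rewrite /= ; apply/set1P/setP => q; rewrite !inE.
    case qW: (q \in W) => //=; apply/idP/idP => /existsP [s /andP [sl sq]]; last first.
      by apply/existsP; exists s; rewrite sq ltnW.
    move: sl; rewrite ltnS leq_eqVlt => /orP [/eqP Es|sl]; last first.
      by apply/existsP; exists s; rewrite sq sl.
    have Est : s = t by apply: val_inj.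
    subst s. have -> := H3 _ _ _ qW pW sq bp. done.
  have Hq : forall q x, q \in W -> x \in p -> x \in q -> q \in Wk W k -> False.
    move=> q x qW xp xq; rewrite (H3 _ _ _ qW pW xq xp) inE pW /=.
    by move/negP: Hs.
  have [y [z [yz Ep]]] : exists y z, y != z /\ p = [set y; z] by apply/cards2P; rewrite H1.
  have [y' [ny' Ep']] : exists y', y' != inl t /\ p = [set inl t; y'].
    move: bp; rewrite Ep !inE => /orP[]/eqP E; subst.
      by exists z; split; [rewrite eq_sym|].
    by exists y; split=> //; rewrite setUC.
  have npk : forall x, x \in p -> ~~ is_paired (Wk W k) x.
    move=> x xp; apply/negP => /pairedP [q qk xq].
    have : q \in W by move: qk; rewrite inE => /andP[].
    by move=> qW; apply: (Hq q x qW xp xq qk).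
  rewrite npk //=.
  have -> : [exists y0, (y0 != inl t) && ~~ is_paired (Wk W k) y0].
    apply/existsP; exists y'; rewrite ny' npk // Ep' !inE eqxx orbT //.
  apply/imsetP; exists y'.
    by rewrite inE ny' npk // Ep' !inE eqxx orbT.
  rewrite -Ep'; apply/setP => q; rewrite in_setU1 !inE.
  apply/idP/idP.
    move=> /andP[qW /existsP [s /andP[sl sq]]].
    move: sl; rewrite ltnS leq_eqVlt => /orP [/eqP Es|sl]; last first.
    by rewrite qW /=; apply/orP; right; apply/existsP; exists s; rewrite sq sl.
    have Est : s = t by apply: val_inj.
    subst s; by rewrite (H3 _ _ _ qW pW sq bp) eqxx.
  move=> /orP [/eqP ->|/andP [qW /existsP [s /andP [sl sq]]]].
    by rewrite pW; apply/existsP; exists t; rewrite bp /= ltnSn.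
  by rewrite qW; apply/existsP; exists s; rewrite sq ltnW.
have [Ha Hb] := H4 t (ltn_ord t) nb.
have Wall : forall k', t <= k' -> Wk W k' = W.
  move=> k' tk; apply/setP => p; rewrite inE.
  case pW: (p \in W) => //=.
  have [s [sl sp]] := Hb p pW.
  by apply/existsP; exists s; rewrite sp (leq_trans sl tk).
rewrite !Wall ?leqnSn //= nb /=.
have -> : [exists y, (y != inl t) && ~~ is_paired W y] = false.
  by apply/negbTE/existsPn => y; apply/negP => /andP [/Ha ->].
by rewrite set11.
Qed.

Lemma possibleP I S (W : wiring I S) : possible W <-> Inv I S I W.
Proof.
split; first by rewrite /possible -R_end; apply: R_Inv.
move=> H; rewrite /possible -R_end.
have -> : W = Wk W I.
  apply/setP => p; rewrite inE; case pW: (p \in W) => //=.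
  have [_ H2 _ _] := H; have [s [_ sp]] := H2 p pW.
  by apply/esym/existsP; exists s; rewrite sp ltn_ord.
exact: Wk_R.
Qed.

Lemma two_set (T : finType) (p : {set T}) a b :
  #|p| = 2 -> a \in p -> b \in p -> a != b -> p = [set a; b].
Proof.
move=> cp ap bp ab; apply/eqP; rewrite eq_sym eqEcard cards2 ab cp leqnn andbT.
by rewrite subUset !sub1set ap bp.
Qed.

Lemma coverP (T : finType) (P : {set {set T}}) x :
  reflect (exists2 q, q \in P & x \in q) (x \in cover P).
Proof. by rewrite /cover; apply: (iffP bigcupP) => [[q]|[q]]; exists q. Qed.

Lemma bb_sub I S (W : wiring I S) p : p \in bb_pairings W -> p \in W.
Proof. by rewrite inE => /andP[]. Qed.

Lemma bb_inf I S (W : wiring I S) p x : p \in bb_pairings W -> x \in p -> infected x.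
Proof. by rewrite inE => /andP[_ /forallP H] xp; move: (H x); rewrite xp. Qed.

Lemma nonB I S (W : wiring I S) p : Inv I S I W -> p \in W -> p \notin bb_pairings W ->
  exists i w, p = [set inl i; inr w] /\ inl i \notin cover (bb_pairings W).
Proof.
case=> H1 H2 H3 H4 pW npB.
have [x xp nx] : exists2 x, x \in p & ~~ infected x.
  move: npB; rewrite inE pW /= => /forallPn [x]; rewrite negb_imply => /andP[xp nx].
  by exists x.
case: x xp nx => // w wp _.
have [i [_ ip]] := H2 p pW.
exists i, w; split; first by apply: two_set => //; apply: H1.
apply/negP => /coverP [q qB iq].
have E := H3 _ _ _ pW (bb_sub qB) ip iq.
by move/negP: npB; apply; rewrite E.
Qed.

Lemma pair_uniq_i I S (W : wiring I S) i w w' : Inv I S I W ->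
  [set inl i; inr w] \in W -> [set inl i; inr w'] \in W -> w = w'.
Proof.
case=> _ _ H3 _ p1 p2.
have E := H3 _ _ (inl i) p1 p2 (setU11 _ _) (setU11 _ _).
have : (inr w : device I S) \in [set inl i; inr w'] by rewrite -E !inE eqxx orbT.
by rewrite !inE => /orP[]/eqP // [].
Qed.

Lemma pair_uniq_w I S (W : wiring I S) i i' w : Inv I S I W ->
  [set inl i; inr w] \in W -> [set inl i'; inr w] \in W -> i = i'.
Proof.
case=> _ _ H3 _ p1 p2.
have E := H3 _ _ (inr w) p1 p2 (set22 _ _) (set22 _ _).
have : (inl i : device I S) \in [set inl i'; inr w] by rewrite -E !inE eqxx.
by rewrite !inE => /orP[]/eqP // [].
Qed.

Lemma partner_inf I S (W : wiring I S) i : Inv I S I W ->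
  inl i \notin cover (bb_pairings W) -> is_paired W (inl i) ->
  exists w, [set inl i; inr w] \in W.
Proof.
move=> HI nc /pairedP [p pW ip].
have npB : p \notin bb_pairings W.
  by apply/negP => pB; move/negP: nc; apply; apply/coverP; exists p.
have [i' [w [Ep _]]] := nonB HI pW npB.
move: ip; rewrite Ep !inE => /orP[]/eqP // [Ei]; subst i'.
by exists w; rewrite -Ep.
Qed.

Lemma partner_cl I S (W : wiring I S) w : Inv I S I W -> is_paired W (inr w) ->
  exists i, [set inl i; inr w] \in W /\ inl i \notin cover (bb_pairings W).
Proof.
move=> HI /pairedP [p pW wp].
have npB : p \notin bb_pairings W by apply/negP => pB; move: (bb_inf pB wp).
have [i [w' [Ep nc]]] := nonB HI pW npB.
move: wp; rewrite Ep !inE => /orP[]/eqP // [Ew]; subst w'.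
by exists i; rewrite -Ep.
Qed.

Definition phi I S (N' : {set 'I_I}) (B : wiring I S) (g : {ffun 'I_#|N'| -> 'I_S}) : wiring I S :=
  B :|: [set [set inl (enum_val k); inr (g k)] | k : 'I_#|N'|].

Lemma phi_inj I S (N' : {set 'I_I}) (B : wiring I S) (HB : forall p x, p \in B -> x \in p -> infected x) :
  injective (@phi I S N' B).
Proof.
move=> g1 g2 E; apply/ffunP => k.
have : [set inl (enum_val k); inr (g1 k)] \in phi B g2.
  by rewrite -E /phi in_setU; apply/orP; right; apply/imsetP; exists k.
rewrite /phi in_setU => /orP[/HB H|/imsetP [k' _ E']].
  by have := H (inr (g1 k)) (set22 _ _).
have : (inl (enum_val k) : device I S) \in [set inl (enum_val k'); inr (g2 k')].
  by rewrite -E' setU11.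
rewrite !inE => /orP[]/eqP // [] /enum_val_inj Ek; subst k'.
have : (inr (g1 k) : device I S) \in [set inl (enum_val k); inr (g2 k)].
  by rewrite -E' set22.
by rewrite !inE => /orP[]/eqP // [].
Qed.

Definition gW I S (W : wiring I S) (N' : {set 'I_I}) (d : 'I_S) : {ffun 'I_#|N'| -> 'I_S} :=
  [ffun k => odflt d [pick w | [set inl (enum_val k); inr w] \in W]].

Lemma W_struct I S (W : wiring I S) (N' : {set 'I_I}) (d : 'I_S) :
  Inv I S I W ->
  (forall i, (i \in N') = (inl i \notin cover (bb_pairings W)) && is_paired W (inl i)) ->
  [/\ W = phi (bb_pairings W) (gW W N' d), injective (gW W N' d)
    & forall w, is_paired W (inr w) -> w \in codom (gW W N' d)].
Proof.
move=> HI HN.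
have Hg : forall k, [set inl (enum_val k); inr (gW W N' d k)] \in W.
  move=> k; rewrite /gW ffunE; case: pickP => [w //|H].
  have := enum_valP k; rewrite HN => /andP[nc pa].
  have [w Hw] := partner_inf HI nc pa.
  by move: (H w); rewrite Hw.
have rk : forall i w, [set inl i; inr w] \in W -> inl i \notin cover (bb_pairings W) ->
    exists k, i = enum_val k /\ gW W N' d k = w.
  move=> i w Hw nc.
  have iN : i \in N' by rewrite HN nc; apply/pairedP; exists [set inl i; inr w]; rewrite ?setU11.
  exists (enum_rank_in iN i); rewrite enum_rankK_in //; split=> //.
  apply: (pair_uniq_i HI _ Hw).
  by have := Hg (enum_rank_in iN i); rewrite enum_rankK_in.
split.
- apply/setP => p; rewrite /phi in_setU; apply/idP/idP => [pW|].
    case: (boolP (p \in bb_pairings W)) => [_ //|npB].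
    have [i [w [Ep nc]]] := nonB HI pW npB.
    have [k [Ei Ek]] := rk i w ltac:(by rewrite -Ep) nc.
    by apply/orP; right; apply/imsetP; exists k; rewrite // Ep Ei Ek.
  by case/orP => [/bb_sub //|/imsetP [k _ ->]].
- move=> k k' E.
  have H1 := Hg k; have H2 := Hg k'; rewrite E in H1.
  exact/enum_val_inj/(pair_uniq_w HI H1 H2).
- move=> w /(partner_cl HI) [i [Hw nc]].
  have [k [_ Ek]] := rk i w Hw nc.
  by apply/codomP; exists k.
Qed.

Lemma phi_props I S (W0 : wiring I S) (N' : {set 'I_I}) (g : {ffun 'I_#|N'| -> 'I_S}) :
  Inv I S I W0 -> (forall i, i \in N' -> inl i \notin cover (bb_pairings W0)) -> injective g ->
  let W := phi (bb_pairings W0) g in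
  [/\ (forall p, p \in W -> #|p| = 2),
      (forall p, p \in W -> exists i : 'I_I, (i < I) /\ inl i \in p),
      (forall p q x, p \in W -> q \in W -> x \in p -> x \in q -> p = q)
    & bb_pairings W = bb_pairings W0].
Proof.
move=> [H1 H2 H3 H4] HN ginj W.
set B := bb_pairings W0.
have Hn : forall q x k, q \in B -> x \in q -> x \in [set inl (enum_val k); inr (g k)] -> False.
  move=> q x k qB xq; rewrite !inE => /orP[]/eqP Ex; subst x.
    by move/negP: (HN _ (enum_valP k)); apply; apply/coverP; exists q.
  by move: (bb_inf qB xq).
split.
- move=> p; rewrite /W /phi in_setU => /orP[/bb_sub/H1 //|/imsetP [k _ ->]].
  by rewrite cards2.
- move=> p; rewrite /W /phi in_setU => /orP[/bb_sub/H2 //|/imsetP [k _ ->]].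
  by exists (enum_val k); rewrite setU11.
- move=> p q x; rewrite /W /phi !in_setU.
  move=> /orP[pB|/imsetP [k _ ->]] /orP[qB|/imsetP [k' _ ->]] xp xq.
  + exact: H3 (bb_sub pB) (bb_sub qB) xp xq.
  + by case: (Hn _ _ _ pB xp xq).
  + by case: (Hn _ _ _ qB xq xp).
  + move: xp xq; rewrite !inE => /orP[]/eqP -> /orP[]/eqP // [].
      by move/enum_val_inj ->.
    by move/ginj ->.
- apply/setP => p; rewrite [in LHS]inE /phi in_setU.
  case: (boolP (p \in B)) => pB /=.
    by move: pB; rewrite /B inE => /andP[].
  case: (boolP (p \in [set _ | k in _])) => //= /imsetP [k _ ->].
  by apply/negbTE/forallPn; exists (inr (g k)); rewrite set22.
Qed.

Lemma cover_paired I S (W : wiring I S) x : x \in cover (bb_pairings W) -> is_paired W x.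
Proof. by move/coverP => [q /bb_sub qW xq]; apply/pairedP; exists q. Qed.

Lemma cnt_uncov I S (W : wiring I S) u : Inv I S I W -> ~~ is_paired W (inl u) ->
  S < #|[set i : 'I_I | inl i \notin cover (bb_pairings W)]|.
Proof.
move=> HI nu; set N := [set i : 'I_I | _].
have uN : u \in N by rewrite inE; apply/negP => /cover_paired; apply/negP.
have [_ _ _ H4] := HI; have [Ha _] := H4 u (ltn_ord u) nu.
pose h (w : 'I_S) := odflt u [pick i | [set inl i; inr w] \in W].
have Hh : forall w, [set inl (h w); inr w] \in W /\ inl (h w) \notin cover (bb_pairings W).
  move=> w; have [i [Hi nc]] := partner_cl HI (Ha (inr w) isT).
  rewrite /h; case: pickP => [i' Hi'|H]; last by move: (H i); rewrite Hi.
  by rewrite /= -(pair_uniq_w HI Hi Hi'); split.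
have hinj : injective h.
  move=> w w' E; have [A1 _] := Hh w; have [A2 _] := Hh w'.
  by rewrite E in A1; apply: (pair_uniq_i HI A1 A2).
have sub : h @: [set: 'I_S] \subset N :\ u.
  apply/subsetP => _ /imsetP [w _ ->]; have [A1 A2] := Hh w.
  rewrite !inE A2 andbT; apply/eqP => E.
  by move/negP: nu; apply; apply/pairedP; exists [set inl (h w); inr w]; rewrite // -E setU11.
have := subset_leq_card sub; rewrite card_imset // cardsT card_ord.
by rewrite (cardsD1 u N) uN add1n ltnS.
Qed.

Lemma cnt_cov I S (W : wiring I S) (d : 'I_S) : Inv I S I W ->
  (forall i, inl i \notin cover (bb_pairings W) -> is_paired W (inl i)) ->
  #|[set i : 'I_I | inl i \notin cover (bb_pairings W)]| <= S.
Proof.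
move=> HI Hp; set N := [set i : 'I_I | _].
pose h (i : 'I_I) := odflt d [pick w | [set inl i; inr w] \in W].
have Hh : forall i, i \in N -> [set inl i; inr (h i)] \in W.
  move=> i; rewrite inE => nc; have [w Hw] := partner_inf HI nc (Hp i nc).
  rewrite /h; case: pickP => [w' Hw' //|H]; by move: (H w); rewrite Hw.
have hinj : {in N &, injective h}.
  move=> i i' iN i'N E; have A1 := Hh i iN; have A2 := Hh i' i'N.
  by rewrite E in A1; apply: (pair_uniq_w HI A1 A2).
by rewrite -(card_in_imset hinj); apply: leq_trans (max_card _) _; rewrite card_ord.
Qed.

Lemma max_prop I S (W : wiring I S) u : Inv I S I W -> ~~ is_paired W (inl u) ->
  forall i, inl i \notin cover (bb_pairings W) -> i != u -> i < u.
Proof.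
move=> HI nu i nc iu; have [_ _ _ H4] := HI; have [Ha Hb] := H4 u (ltn_ord u) nu.
have : (inl i : device I S) != inl u by apply: contra iu => /eqP [->].
move/Ha => pi; have [w Hw] := partner_inf HI nc pi.
have [s [su sp]] := Hb _ Hw.
by move: sp; rewrite !inE => /orP[]/eqP // [<-].
Qed.

Lemma phi_paired_B I S (N' : {set 'I_I}) (B : wiring I S) g x :
  x \in cover B -> is_paired (@phi I S N' B g) x.
Proof. by move/coverP => [q qB xq]; apply/pairedP; exists q; rewrite // in_setU qB. Qed.

Lemma phi_paired_l I S (N' : {set 'I_I}) (B : wiring I S) (g : {ffun 'I_#|N'| -> 'I_S}) (k : 'I_#|N'|) :
  is_paired (@phi I S N' B g) (inl (enum_val k)).
Proof.
apply/pairedP; exists [set inl (enum_val k); inr (g k)]; rewrite ?setU11 //.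
by rewrite in_setU; apply/orP; right; apply/imsetP; exists k.
Qed.

Lemma phi_paired_r I S (N' : {set 'I_I}) (B : wiring I S) (g : {ffun 'I_#|N'| -> 'I_S}) (k : 'I_#|N'|) :
  is_paired (@phi I S N' B g) (inr (g k)).
Proof.
apply/pairedP; exists [set inl (enum_val k); inr (g k)]; rewrite ?set22 //.
by rewrite in_setU; apply/orP; right; apply/imsetP; exists k.
Qed.

Lemma card_N I S (W0 : wiring I S) : Inv I S I W0 ->
  #|[set i : 'I_I | inl i \notin cover (bb_pairings W0)]| = I - (#|bb_pairings W0|).*2.
Proof.
move=> [H1 H2 H3 H4]; set B := bb_pairings W0.
have triv : trivIset B.
  apply/trivIsetP => p q pB qB pq; rewrite -setI_eq0; apply/eqP/setP => x; rewrite !inE.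
  apply/negbTE/negP => /andP[xp xq]; move/eqP: pq; apply.
  exact: H3 (bb_sub pB) (bb_sub qB) xp xq.
have cc : #|cover B| = #|B|.*2.
  move: triv; rewrite /trivIset => /eqP <-.
  rewrite (eq_bigr (fun _ => 2)); last by move=> p /bb_sub /H1.
  by rewrite sum_nat_const muln2.
set C := [set i : 'I_I | inl i \in cover B].
have cC : #|C| = #|cover B|.
  have <- : inl @: C = cover B.
    apply/setP => x; apply/imsetP/idP => [[i]|xc]; first by rewrite inE => ? ->.
    case: x xc => [i|w] xc; first by exists i; rewrite ?inE.
    by move/coverP: xc => [q qB wq]; move: (bb_inf qB wq).
  by rewrite card_imset //; move=> a b [].
have -> : [set i : 'I_I | inl i \notin cover B] = ~: C by apply/setP => i; rewrite !inE.
by rewrite cardsCs setCK card_ord cC cc.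
Qed.
Lemma ffact_diff S m : 0 < S ->
  S ^_ m - (S - 1) ^_ m = if m == 0 then 0 else m`! * 'C(S - 1, m - 1).
Proof.
case: S => // S _; case: m => [|m]; first by rewrite !ffactn0.
rewrite /= subn1 /= subn1 /= ffactSS ffactnSr.
case: (leqP m S) => mS.
  rewrite -bin_ffact factS.
  have : S - m <= S by apply: leq_subr.
  move: ('C(S, m)) (m`!) => a b h; rewrite -[S.+1 * _]mulnC -mulnBr.
  have -> : S.+1 - (S - m) = m.+1 by lia.
  lia.
by rewrite ffact_small // bin_small // muln0 mul0n muln0.
Qed.

Lemma card_G S m (t : 'I_S) :
  #|[set g : {ffun 'I_m -> 'I_S} | injectiveb g && (t \in codom g)]| = S ^_ m - (S - 1) ^_ m.
Proof.
have E1 := card_inj_ffuns 'I_m 'I_S.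
have E2 := card_inj_ffuns_on 'I_m (predC1 t).
rewrite !card_ord in E1; rewrite cardC1 !card_ord in E2.
rewrite -E1 subn1 -E2 -(cardsID [set g : {ffun 'I_m -> 'I_S} in ffun_on (predC1 t) | injectiveb g] [set g : {ffun 'I_m -> 'I_S} | injectiveb g]).
have -> : [set g : {ffun 'I_m -> 'I_S} | injectiveb g] :&: [set g in ffun_on (predC1 t) | injectiveb g] = [set g in ffun_on (predC1 t) | injectiveb g].
  by apply/setP => g; rewrite !inE; case: (injectiveb g); rewrite ?andbF ?andbT.
rewrite addKn; apply: eq_card => g; rewrite !inE.
case: (injectiveb g); rewrite ?andbF //= andbT.
rewrite andbT; apply/idP/idP => [/codomP [k ->]|].
  by apply/negP => /forallP /(_ k); rewrite !inE eqxx.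
move/forallPn => [k]; rewrite !inE negbK => /eqP <-; exact: codom_f.
Qed.
Lemma arith I S j : Lbound I S <= j -> j <= I./2 ->
  if dagger I S j then I - j.*2 = S.+1 else I - j.*2 <= S.
Proof.
rewrite /Lbound /dagger -!divn2.
have h1 := modn2 (I - S); have h2 := modn2 (I + S).
case: (odd (I - S)) h1 => h1; case: (odd (I + S)) h2 => h2 /=;
case: ifP => H; move=> A B; rewrite ?andbF ?andbT //= ?negbK -?divn2 in A *;
  try (case: ifP => /eqP ?); lia.
Qed.

Unset Implicit Arguments.

Theorem lemma5 (I S j : nat) (hS : 1 <= S)
  (hj : Lbound I S <= j <= I./2) (t : 'I_S)
  (B : {set {set device I S}}) (hB : #|B| = j)
  (hBposs : exists W0 : wiring I S, possible W0 /\ bb_pairings W0 = B) :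
  #|[set W : wiring I S | [&& possible W, bb_pairings W == B
                              & is_paired W (inr t)]]| =
  (if dagger I S j then S`!
   else if I - j.*2 == 0 then 0   (* convention 'C(A, B) = 0 for B < 0 *)
   else (I - j.*2)`! * 'C(S - 1, I - j.*2 - 1)).
Proof.
case: hBposs => W0 [pW0 EB]; subst B.
have HI0 := (possibleP W0).1 pW0.
have cN := card_N HI0; rewrite hB in cN.
set B := bb_pairings W0 in cN *.
set N := [set i : 'I_I | inl i \notin cover B] in cN.
have d : 'I_S := Ordinal hS.
have Har := arith (andP hj).1 (andP hj).2.
have inT : forall W : wiring I S, W \in [set W : wiring I S | [&& possible W, bb_pairings W == B
                              & is_paired W (inr t)]] ->
   [/\ Inv I S I W, bb_pairings W = B & is_paired W (inr t)].
  move=> W; rewrite inE => /and3P [pW /eqP bW tW]; split=> //; exact/possibleP.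
have binj : forall p x, p \in B -> x \in p -> infected x by move=> p x; apply: bb_inf.
have HNsub : forall (N' : {set 'I_I}), N' \subset N -> forall i, i \in N' -> inl i \notin cover B.
  by move=> N' sub i iN; move: (subsetP sub i iN); rewrite inE.
case: (dagger I S j) Har => Har.
- have cN' : #|N| = S.+1 by rewrite cN.
  have [u0 u0N nu0] : exists2 u0, u0 \in N & ~~ is_paired W0 (inl u0).
    case: (boolP [exists i, (i \in N) && ~~ is_paired W0 (inl i)]) => [/existsP [i /andP [? ?]]|/existsPn H]; first by exists i.
    have Hp : forall i, inl i \notin cover B -> is_paired W0 (inl i).
      by move=> i nc; move: (H i); rewrite inE nc /= negbK.
    by have := cnt_cov d HI0 Hp; rewrite -/B -/N cN' ltnn.
  set N' := N :\ u0.
  have cN'' : #|N'| = S.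
    by have := cardsD1 u0 N; rewrite u0N cN' add1n => /eqP; rewrite eqSS => /eqP <-.
  have umax : forall i, i \in N -> i != u0 -> i < u0.
    by move=> i iN; apply: (max_prop HI0 nu0); rewrite inE in iN.
  rewrite -ffactnn.
  have <- : #|[set f : {ffun 'I_#|N'| -> 'I_S} | injectiveb f]| = S ^_ S by rewrite card_inj_ffuns !card_ord cN''.
  rewrite -(card_imset _ (@phi_inj I S N' B binj)).
  apply: eq_card => W; apply/idP/idP.
  + move/inT => [HI bW tW].
    have [u uN nu] : exists2 u, u \in N & ~~ is_paired W (inl u).
      case: (boolP [exists i, (i \in N) && ~~ is_paired W (inl i)]) => [/existsP [i /andP [? ?]]|/existsPn H]; first by exists i.
      have Hp : forall i, inl i \notin cover (bb_pairings W) -> is_paired W (inl i).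
        by move=> i nc; move: (H i); rewrite inE -bW nc /= negbK.
      by have := cnt_cov d HI Hp; rewrite bW -/B -/N cN' ltnn.
    have Eu : u = u0.
      apply/eqP; apply/negP => /negP uu.
      have h1 := umax u uN uu.
      have h2 : u0 < u by apply: (max_prop HI nu); rewrite ?bW; [rewrite inE in u0N | rewrite eq_sym].
      by move: (leq_trans h1 (ltnW h2)); rewrite ltnn.
    subst u.
    have [_ _ _ H4] := HI; have [Ha _] := H4 u0 (ltn_ord u0) nu.
    have HN : forall i, (i \in N') = (inl i \notin cover (bb_pairings W)) && is_paired W (inl i).
      move=> i; rewrite bW !inE; case: (eqVneq i u0) => [->|iu] /=; first by rewrite (negbTE nu) andbF.
      case: (inl i \notin cover B) => //=; apply/esym/Ha.
      by apply: contra iu => /eqP [->].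
    have [EW ginj _] := W_struct d HI HN.
    apply/imsetP; exists (gW W N' d); last by rewrite {1}EW bW.
    by rewrite inE; apply/injectiveP.
  + case/imsetP => g gD ->; rewrite inE in gD; move/injectiveP: gD => ginj.
    have sub : N' \subset N by apply: subD1set.
    have [P1 P2 P3 P4] := phi_props HI0 (HNsub N' sub) ginj.
    have surj : forall w, w \in codom g.
      by move=> w; apply: inj_card_onto => //; rewrite !card_ord cN''.
    have pN' : forall i, i \in N' -> is_paired (phi B g) (inl i).
      by move=> i iN; rewrite -(enum_rankK_in iN iN); apply: phi_paired_l.
    have pr : forall w, is_paired (phi B g) (inr w).
      by move=> w; move/codomP: (surj w) => [k ->]; apply: phi_paired_r.
    have pl : forall i, i != u0 -> is_paired (phi B g) (inl i).
      move=> i iu; case: (boolP (inl i \in cover B)) => [/phi_paired_B //|nc].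
      by apply: pN'; rewrite !inE iu nc.
    have HI : Inv I S I (phi B g).
      split=> // u _ nu.
      have Eu : u = u0 by apply/eqP; apply: contraR nu => /pl.
      subst u; split.
        by case=> [i|w] iu; [apply: pl; apply: contra iu => /eqP -> | apply: pr].
      have [_ _ _ H40] := HI0; have [_ Hb0] := H40 u0 (ltn_ord u0) nu0.
      move=> p; rewrite /phi in_setU => /orP [/bb_sub /Hb0 //|/imsetP [k _ ->]].
      exists (enum_val k); rewrite setU11; split=> //.
      have := enum_valP k; rewrite !inE => /andP [ku kN].
      by apply: umax; rewrite // inE.
    rewrite inE; apply/and3P; split; first exact/possibleP.
      by rewrite P4 eqxx.
    exact: pr.
- rewrite -cN -(ffact_diff #|N| hS) -(card_G #|N| t).
  rewrite -(card_imset _ (@phi_inj I S N B binj)).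
  apply: eq_card => W; apply/idP/idP.
  + move/inT => [HI bW tW].
    have HN : forall i, (i \in N) = (inl i \notin cover (bb_pairings W)) && is_paired W (inl i).
      move=> i; rewrite bW inE; case: (inl i \notin cover B) => //=.
      case: (boolP (is_paired W (inl i))) => // nu.
      by have := cnt_uncov HI nu; rewrite bW -/B -/N cN ltnNge Har.
    have [EW ginj tc] := W_struct d HI HN.
    apply/imsetP; exists (gW W N d); last by rewrite {1}EW bW.
    by rewrite inE; apply/andP; split; [apply/injectiveP | apply: tc].
  + case/imsetP => g gD ->; rewrite inE in gD; move: gD => /andP [/injectiveP ginj tg].
    have [P1 P2 P3 P4] := phi_props HI0 (HNsub N (subxx _)) ginj.
    have HI : Inv I S I (phi B g).
      split=> // u _ nu; exfalso; move/negP: nu; apply.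
      case: (boolP (inl u \in cover B)) => [/phi_paired_B //|nc].
      have uN : u \in N by rewrite inE.
      by rewrite -(enum_rankK_in uN uN); apply: phi_paired_l.
    rewrite inE; apply/and3P; split; first exact/possibleP.
      by rewrite P4 eqxx.
    by move/codomP: tg => [k ->]; apply: phi_paired_r.
Qed.
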